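(* Let $r,n\ge1$, $a,b$ integers with $\gcd(a,b)=1$, and let $\lambda$ be an $(a,b;n)$-balanced partition of $rn$. Then $$\#\{(i,j)\in\lambda: d_{i,j}\text{ is invariant}\}+\#\{(i,j)\in\lambda: u_{i,j}\text{ is invariant}\}=2r.$$
   Context: Partitions are Young diagrams $\lambda\subset\mathbb{Z}_{\ge0}^2$ (finite sets with $(i,j)\in\lambda\Rightarrow(i',j')\in\lambda$ for $i'\le i$, $j'\le j$). $l(j)=\#\{i:(i,j)\in\lambda\}$, $c(i)=\#\{j:(i,j)\in\lambda\}$. Box $(i,j)$ has color $ai+bj\bmod n$; $\lambda$ is $(a,b;n)$-balanced if each residue mod $n$ is the color of exactly $r$ boxes. An arrow from $(l,s)$ to $(i',j')$ is invariant if $a(l-i')+b(s-j')\equiv0\pmod n$. For $(i,j)\in\lambda$, $d_{i,j}$ is the arrow from $(l(j),j)$ to $(i,c(i)-1)$ and $u_{i,j}$ the arrow from $(i,c(i))$ to $(l(j)-1,j)$. *)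

(* Defs.v *)
From mathcomp Require Import all_boot all_order all_algebra.
Set Implicit Arguments. Unset Strict Implicit. Unset Printing Implicit Defensive.
Import Order.TTheory GRing.Theory Num.Theory.
Local Open Scope ring_scope.

(* A partition (Young diagram) is a finite set of boxes (i,j) in Z>=0^2,
   represented as a duplicate-free list, closed under going down-left. *)
Definition is_young (lam : seq (nat * nat)) : Prop :=
  uniq lam /\
  forall i j i' j' : nat, (i, j) \in lam -> (i' <= i)%N -> (j' <= j)%N ->
    (i', j') \in lam.

Definition lcol (lam : seq (nat * nat)) (j : nat) : nat :=
  count (fun p => p.2 == j) lam.
Definition crow (lam : seq (nat * nat)) (i : nat) : nat :=
  count (fun p => p.1 == i) lam.

(* colour of box (i,j): a i + b j mod n, as a residue in [0, n) *)
Definition color (a b : int) (n : nat) (p : nat * nat) : int :=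
  ((a * (p.1)%:Z + b * (p.2)%:Z) %% (n%:Z))%Z.

Definition balanced (a b : int) (n r : nat) (lam : seq (nat * nat)) : Prop :=
  forall k : nat, (k < n)%N -> count (fun p => color a b n p == k%:Z) lam = r.

Definition arrow_invariant (a b : int) (n : nat) (src tgt : int * int) : bool :=
  ((n%:Z) %| (a * (src.1 - tgt.1) + b * (src.2 - tgt.2)))%Z.

Definition d_arrow (lam : seq (nat * nat)) (p : nat * nat) : (int * int) * (int * int) :=
  (((lcol lam p.2)%:Z, (p.2)%:Z), ((p.1)%:Z, (crow lam p.1)%:Z - 1)).
Definition u_arrow (lam : seq (nat * nat)) (p : nat * nat) : (int * int) * (int * int) :=
  (((p.1)%:Z, (crow lam p.1)%:Z), ((lcol lam p.2)%:Z - 1, (p.2)%:Z)).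

(* Main.v *)
Require Import Defs.
From mathcomp Require Import all_boot all_order all_algebra.
From mathcomp Require Import ring algC cyclotomic.
Set Implicit Arguments. Unset Strict Implicit. Unset Printing Implicit Defensive.
Import Order.TTheory GRing.Theory Num.Theory.
Local Open Scope ring_scope.

Fixpoint boxes (s : seq nat) : seq (nat * nat) :=
  if s is c :: s' then [seq (0%N, j) | j <- index_iota 0 c] ++
                       [seq (p.1.+1, p.2) | p <- boxes s']
  else [::].
Definition colc (s : seq nat) (j : nat) : nat := count (fun c => j < c)%N s.

Lemma mem_boxes s i j : ((i, j) \in boxes s) = (i < size s)%N && (j < nth 0%N s i)%N.
Proof.
elim: s i => [|c s IH] i //=.
rewrite mem_cat; case: i => [|i] /=.
  have -> : ((0%N, j) \in [seq (p.1.+1, p.2) | p <- boxes s]) = false.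
    by apply/negbTE/mapP => -[p _ []].
  by rewrite orbF mem_map ?mem_index_iota // => x y [].
have -> : ((i.+1, j) \in [seq (0%N, j) | j <- index_iota 0 c]) = false.
  by apply/negbTE/mapP => -[p _ []].
rewrite /= -IH; apply/mapP/idP => [[p hp [-> ->]]|h].
  by rewrite -surjective_pairing.
by exists (i, j).
Qed.

Lemma uniq_boxes s : uniq (boxes s).
Proof.
elim: s => [|c s IH] //=.
rewrite cat_uniq map_inj_uniq ?iota_uniq; last by move=> x y [].
rewrite map_inj_uniq ?IH; last by move=> [x1 x2] [y1 y2] [-> ->].
rewrite andbT /=; apply/hasPn => p /mapP [p' _ ->]; by apply/mapP => -[x _ []].
Qed.

Lemma count_col s j : count (fun p : nat * nat => p.2 == j) (boxes s) = colc s j.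
Proof.
elim: s => [|c s IH] //=.
rewrite count_cat !count_map IH /colc /=; congr (_ + _)%N.
rewrite (@eq_count _ _ (pred1 j)) ?count_uniq_mem ?iota_uniq ?mem_index_iota //.
Qed.

Section Young.
Variable lam : seq (nat * nat).
Hypothesis hy : is_young lam.

Lemma young_row1 i j : (i, j) \in lam -> (j < crow lam i)%N.
Proof.
move=> h; case: hy => hu hd.
rewrite /crow -size_filter.
have := @uniq_leq_size _ [seq (i, k) | k <- iota 0 j.+1] (filter (fun p => p.1 == i) lam).
rewrite size_map size_iota; apply.
  by rewrite map_inj_uniq ?iota_uniq // => x y [].
move=> p /mapP [k]; rewrite mem_iota add0n => /andP [_ hk] ->.
by rewrite mem_filter /= eqxx; apply: hd h _ _.
Qed.

Lemma young_row2 i j : (j < crow lam i)%N -> (i, j) \in lam.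
Proof.
case: hy => hu hd.
apply: contraTT => hn; rewrite -leqNgt /crow -size_filter.
have hlt : forall p, p \in filter (fun p => p.1 == i) lam -> (p.2 < j)%N.
  move=> [x y]; rewrite mem_filter /= => /andP [/eqP -> hp].
  by rewrite ltnNge; apply: contra hn => hjy; apply: hd hp _ _.
have := @uniq_leq_size _ (map snd (filter (fun p => p.1 == i) lam)) (iota 0 j).
rewrite size_map size_iota; apply.
  rewrite map_inj_in_uniq ?filter_uniq //.
  move=> [x1 x2] [y1 y2]; rewrite !mem_filter /= => /andP [/eqP -> _] /andP [/eqP -> _] ->.
  by [].
by move=> y /mapP [p hp ->]; rewrite mem_iota add0n hlt.
Qed.

Lemma young_size i j : (i, j) \in lam -> (i < size lam)%N.
Proof.
move=> h; case: hy => hu hd.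
have := @uniq_leq_size _ [seq (k, 0%N) | k <- iota 0 i.+1] lam.
rewrite size_map size_iota; apply.
  by rewrite map_inj_uniq ?iota_uniq // => x y [].
move=> p /mapP [k]; rewrite mem_iota add0n => /andP [_ hk] ->.
by apply: hd h _ _.
Qed.

Definition sof := mkseq (crow lam) (size lam).

Lemma sof_sorted : sorted geq sof.
Proof.
rewrite /sof /mkseq; apply: (homo_sorted (e := leq)); last exact: iota_sorted.
move=> x y hxy; rewrite /geq /=.
rewrite leqNgt; apply/negP => h.
have := young_row2 h; case: hy => _ hd => /(hd _ _ x) /(_ hxy (leqnn _)) /young_row1.
by rewrite ltnn.
Qed.

Lemma perm_sof : perm_eq lam (boxes sof).
Proof.
case: hy => hu hd.
apply: uniq_perm => //; first exact: uniq_boxes.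
move=> [i j]; rewrite mem_boxes size_mkseq.
apply/idP/andP => [h|[hi hj]].
  split; first exact: young_size h.
  by rewrite nth_mkseq ?young_row1 // (young_size h).
by apply: young_row2; rewrite nth_mkseq in hj.
Qed.

Lemma lcol_sof j : lcol lam j = colc sof j.
Proof. by rewrite -count_col /lcol; move/permP: perm_sof; apply. Qed.

Lemma crow_sof p : p \in boxes sof -> crow lam p.1 = nth 0%N sof p.1.
Proof.
case: p => i j; rewrite mem_boxes size_mkseq => /andP [hi _].
by rewrite nth_mkseq.
Qed.
End Young.

Section Alg.
Variable F : fieldType.

Definition Vs (t q : F) s := \sum_(p <- boxes s) t ^+ p.1 * q ^+ p.2.

Lemma Vs_cons t q c s : Vs t q (c :: s) = \sum_(0 <= j < c) q ^+ j + t * Vs t q s.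
Proof.
rewrite /Vs /= big_cat /= !big_map mulr_sumr; congr (_ + _).
  by apply: eq_bigr => j _; rewrite expr0 mul1r.
by apply: eq_bigr => p _; rewrite exprS mulrA.
Qed.

Lemma colc_cons c s j : colc (c :: s) j = ((j < c)%N + colc s j)%N.
Proof. by []. Qed.

Lemma col_formula t q s c : sorted geq s -> all (fun x => x <= c)%N s ->
  (1 - t) * Vs t q s = \sum_(0 <= j < c) q ^+ j * (1 - t ^+ colc s j).
Proof.
elim: s c => [|d s IH] c /=.
  move=> _ _; rewrite /Vs big_nil mulr0 big1 // => j _.
  by rewrite /colc /= expr0 subrr mulr0.
move=> hs /andP [hdc hall].
have hs' : sorted geq s by apply: path_sorted hs.
have hsd : all (fun x => x <= d)%N s.
  exact: order_path_min (fun y x z h1 h2 => leq_trans h2 h1) hs.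
rewrite Vs_cons mulrDr mulrCA (IH d) //.
rewrite (big_cat_nat (leq0n d) hdc) /=.
rewrite [X in _ = _ + X]big1_seq; last first.
  move=> j /andP [_]; rewrite mem_index_iota => /andP [hdj _].
  rewrite ltnNge hdj /= add0n.
  have -> : colc s j = 0%N.
    apply/eqP; rewrite -leqn0 leqNgt -has_count; apply/hasPn => x hx.
    by rewrite -leqNgt; apply: leq_trans hdj; move/allP: hsd => /(_ x hx).
  by rewrite expr0 subrr mulr0.
rewrite addr0 !mulr_sumr -big_split /=.
apply: eq_big_seq => j; rewrite mem_index_iota => /andP [_ hj].
rewrite hj add1n exprS; ring.
Qed.

Definition Tt (t q : F) s (p : nat * nat) :=
  t ^+ colc s p.2 * q ^+ p.2 * q / (t ^+ p.1 * q ^+ nth 0%N s p.1)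
  + t * t ^+ p.1 * q ^+ nth 0%N s p.1 / (t ^+ colc s p.2 * q ^+ p.2).

Lemma geom (q : F) c : q ^+ c = 1 - (1 - q) * \sum_(0 <= j < c) q ^+ j.
Proof.
rewrite big_mkord; apply: (addIr (-1)); rewrite subrX1; ring.
Qed.

Lemma Tident t q s : t != 0 -> q != 0 -> sorted geq s ->
  \sum_(p <- boxes s) Tt t q s p =
  Vs t^-1 q^-1 s + t * q * Vs t q s - (1 - t) * (1 - q) * Vs t q s * Vs t^-1 q^-1 s.
Proof.
move=> t0 q0; elim: s => [|c s IH] /=.
  by move=> _; rewrite /Vs !big_nil; ring.
move=> hs.
have hs' : sorted geq s by apply: path_sorted hs.
have hsc : all (fun x => x <= c)%N s.
  exact: order_path_min (fun y x z h1 h2 => leq_trans h2 h1) hs.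
rewrite big_cat /= !big_map.
have -> : \sum_(p <- boxes s) Tt t q (c :: s) (p.1.+1, p.2) = \sum_(p <- boxes s) Tt t q s p.
  apply: eq_big_seq => -[i j]; rewrite mem_boxes => /andP [hi hj].
  have hjc : (j < c)%N.
    apply: leq_trans hj _; by move/allP: hsc; apply; rewrite mem_nth.
  rewrite /Tt /= hjc add1n !exprS.
  field.
  by rewrite ?mulf_neq0 ?invr_neq0 ?expf_neq0 ?t0 ?q0.
rewrite IH //.
set B := \sum_(0 <= j < c) q ^+ j.
set Bb := \sum_(0 <= j < c) q^-1 ^+ j.
have E1 : \sum_(j <- index_iota 0 c) Tt t q (c :: s) (0%N, j) =
   t * q / q ^+ c * (B - (1 - t) * Vs t q s) +
   q ^+ c * (Bb - (1 - t^-1) * Vs t^-1 q^-1 s).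
  rewrite (@col_formula t q s c) // (@col_formula t^-1 q^-1 s c) // /B /Bb -!sumrB !mulr_sumr -big_split /=.
  apply: eq_big_nat => j /andP [_ hj].
  rewrite /Tt /= hj add1n !exprS !expr0 !exprVn.
  field.
  by rewrite ?mulf_neq0 ?invr_neq0 ?expf_neq0 ?t0 ?q0.
rewrite E1 !Vs_cons -/B -/Bb.
have hQi : (q ^+ c)^-1 = 1 - (1 - q^-1) * Bb by rewrite -exprVn geom.
rewrite hQi (geom q c) -/B.
field.
by rewrite t0 q0.
Qed.
End Alg.

Lemma count_sum (T : Type) (P : pred T) (L : seq T) :
  ((count P L)%:R : algC) = \sum_(p <- L) (P p)%:R.
Proof. by elim: L => [|x L IH]; rewrite ?big_nil ?big_cons //= natrD IH. Qed.

Section Count.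
Variable (n : nat) (z : algC).
Hypothesis n0 : (0 < n)%N.
Hypothesis pz : n.-primitive_root z.

Lemma z_neq0 : z != 0.
Proof.
apply/eqP => h; have := prim_expr_order pz; rewrite h expr0n.
by rewrite (gtn_eqF n0) /= => /eqP; rewrite eq_sym oner_eq0.
Qed.

Definition E (m : int) : algC := z ^ m.

Lemma ED x y : E (x + y) = E x * E y.
Proof. exact: expfzDr z_neq0. Qed.

Lemma EM x (k : nat) : E (x * k%:Z) = E x ^+ k.
Proof. by rewrite /E -exprz_exp. Qed.

Lemma E_neq0 m : E m != 0.
Proof. exact: expfz_neq0 z_neq0. Qed.

Lemma Emuln y : E (y * n%:Z) = 1.
Proof.
rewrite /E -exprz_exp exprzAC.
have -> : z ^ n%:Z = 1 by exact: prim_expr_order pz.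
exact: exp1rz.
Qed.

Lemma Emod m : E (m %% n%:Z)%Z = E m.
Proof. by rewrite ED -mulNr Emuln mulr1. Qed.

Lemma Epown m : E m ^+ n = 1.
Proof. by rewrite -EM Emuln. Qed.

Lemma E_eq1 m : (E m == 1) = (n%:Z %| m)%Z.
Proof.
have nz : n%:Z != 0 by rewrite eqz_nat -lt0n.
rewrite -Emod.
have hge := modz_ge0 m nz.
have hlt : ((m %% n%:Z)%Z < n%:Z) by apply: ltz_pmod; rewrite ltz_nat.
rewrite -(gez0_abs hge) in hlt *.
rewrite /E /= -(prim_order_dvd pz).
rewrite ltz_nat in hlt.
apply/idP/idP.
  move=> hd; apply/dvdz_mod0P; apply/eqP; rewrite -absz_eq0.
  by move: hd; rewrite /dvdn modn_small.
by move/dvdz_mod0P => ->; rewrite dvdn0.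
Qed.

Lemma geom0 (w : algC) : w != 1 -> w ^+ n = 1 -> \sum_(k < n) w ^+ k = 0.
Proof.
move=> h1 hn; have := subrX1 w n; rewrite hn subrr => /esym/eqP.
by rewrite mulf_eq0 subr_eq0 (negbTE h1) /= => /eqP.
Qed.

Lemma filt m : \sum_(k < n) E m ^+ k = ((n%:Z %| m)%Z)%:R * n%:R.
Proof.
rewrite -E_eq1; case: (boolP (E m == 1)) => h.
  by rewrite (eqP h) mul1r; under eq_bigr do rewrite expr1n; rewrite sumr_const card_ord.
by rewrite mul0r geom0 // Epown.
Qed.

Lemma zk_neq1 k : (0 < k < n)%N -> z ^+ k != 1.
Proof.
move=> /andP [k0 kn]; rewrite -(prim_order_dvd pz); apply/negP => /dvdn_leq.
by move=> /(_ k0); rewrite leqNgt kn.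
Qed.

Lemma sum_zk k : (0 < k < n)%N -> \sum_(c < n) E c%:Z ^+ k = 0.
Proof.
move=> hk; under eq_bigr do rewrite /E /= exprAC.
apply: geom0; first exact: zk_neq1.
by rewrite exprAC (prim_expr_order pz) expr1n.
Qed.

Lemma sum_zk_inv k : (0 < k < n)%N -> \sum_(c < n) (E c%:Z ^+ k)^-1 = 0.
Proof.
move=> hk; under eq_bigr do rewrite /E /= exprAC -exprVn.
apply: geom0; first by rewrite invr_eq1; exact: zk_neq1.
by rewrite exprVn exprAC (prim_expr_order pz) expr1n invr1.
Qed.

Variables (a b : int) (r : nat) (lam : seq (nat * nat)).
Hypothesis bal : balanced a b n r lam.

Lemma part_sum (f : int -> algC) :
  \sum_(p <- lam) f (color a b n p) = r%:R * \sum_(c < n) f c%:Z.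
Proof.
have nz : n%:Z != 0 by rewrite eqz_nat -lt0n.
transitivity (\sum_(p <- lam) \sum_(c < n) (color a b n p == c%:Z)%:R * f c%:Z).
  apply: eq_bigr => p _.
  have hge := modz_ge0 (a * (p.1)%:Z + b * (p.2)%:Z) nz.
  have hlt : ((a * (p.1)%:Z + b * (p.2)%:Z) %% n%:Z)%Z < n%:Z.
    by apply: ltz_pmod; rewrite ltz_nat.
  rewrite -(gez0_abs hge) ltz_nat in hlt.
  rewrite (bigD1 (Ordinal hlt)) //= big1 ?addr0.
    by rewrite /color gez0_abs // eqxx mul1r.
  move=> c hc; rewrite /color -(gez0_abs hge) eqz_nat.
  have -> : (`|((a * (p.1)%:Z + b * (p.2)%:Z) %% n%:Z)%Z|%N == c) = false.
    by apply/negbTE; apply: contra hc => /eqP h; apply/eqP/val_inj.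
  by rewrite mul0r.
rewrite exchange_big /= mulr_sumr; apply: eq_bigr => c _.
by rewrite -mulr_suml -count_sum bal.
Qed.

Lemma Eterm_d (l c i j k : nat) :
  E (a * (l%:Z - i%:Z) + b * (j%:Z - (c%:Z - 1))) ^+ k =
  (E a ^+ k) ^+ l * (E b ^+ k) ^+ j * (E b ^+ k) / ((E a ^+ k) ^+ i * (E b ^+ k) ^+ c).
Proof.
have h : E (a * (l%:Z - i%:Z) + b * (j%:Z - (c%:Z - 1))) * (E a ^+ i * E b ^+ c)
         = E a ^+ l * E b ^+ j * E b.
  rewrite -!EM -!ED; congr E; ring.
have h2 : E (a * (l%:Z - i%:Z) + b * (j%:Z - (c%:Z - 1))) =
          E a ^+ l * E b ^+ j * E b / (E a ^+ i * E b ^+ c).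
  by rewrite -h mulfK // mulf_neq0 // expf_neq0 // E_neq0.
rewrite h2 expr_div_n !exprMn !(exprAC (E a) k) !(exprAC (E b) k).
by [].
Qed.

Lemma Eterm_u (l c i j k : nat) :
  E (a * (i%:Z - (l%:Z - 1)) + b * (c%:Z - j%:Z)) ^+ k =
  (E a ^+ k) * (E a ^+ k) ^+ i * (E b ^+ k) ^+ c / ((E a ^+ k) ^+ l * (E b ^+ k) ^+ j).
Proof.
have h : E (a * (i%:Z - (l%:Z - 1)) + b * (c%:Z - j%:Z)) * (E a ^+ l * E b ^+ j)
         = E a * E a ^+ i * E b ^+ c.
  rewrite -!EM -!ED; congr E; ring.
have h2 : E (a * (i%:Z - (l%:Z - 1)) + b * (c%:Z - j%:Z)) =
          E a * E a ^+ i * E b ^+ c / (E a ^+ l * E b ^+ j).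
  by rewrite -h mulfK // mulf_neq0 // expf_neq0 // E_neq0.
rewrite h2 expr_div_n !exprMn !(exprAC (E a) k) !(exprAC (E b) k).
by [].
Qed.

Lemma Ebox (k : nat) (p : nat * nat) :
  (E a ^+ k) ^+ p.1 * (E b ^+ k) ^+ p.2 = E (color a b n p) ^+ k.
Proof.
by rewrite /color Emod ED !EM exprMn (exprAC (E a) p.1) (exprAC (E b) p.2).
Qed.
End Count.

Lemma sum_const_seq (T : Type) (L : seq T) (x : algC) :
  \sum_(p <- L) x = (size L)%:R * x.
Proof. by elim: L => [|y L IH]; rewrite ?big_nil ?mul0r // big_cons IH /= -add1n natrD mulrDl mul1r. Qed.

Unset Implicit Arguments.
Set Strict Implicit.

Theorem corollary2p1 (r n : nat) (a b : int) (lam : seq (nat * nat)) :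
  (1 <= r)%N -> (1 <= n)%N -> gcdz a b = 1%N ->
  is_young lam -> size lam = (r * n)%N -> balanced a b n r lam ->
  (count (fun p => arrow_invariant a b n (d_arrow lam p).1 (d_arrow lam p).2) lam
   + count (fun p => arrow_invariant a b n (u_arrow lam p).1 (u_arrow lam p).2) lam
   = 2 * r)%N.
Proof.
move=> r1 n1 _ hy hsize hbal.
have [z pz] := C_prim_root_exists n1.
set s := sof lam.
have hperm := perm_sof hy.
have nz : (n%:R : algC) != 0 by rewrite pnatr_eq0 -lt0n.
apply/eqP; rewrite -(eqr_nat algC) -(inj_eq (mulIf nz)); apply/eqP.
rewrite natrD !count_sum mulrDl !mulr_suml -big_split /=.
transitivity (\sum_(p <- lam) \sum_(k < n)
   (E z (a * ((lcol lam p.2)%:Z - (p.1)%:Z) + b * ((p.2)%:Z - ((crow lam p.1)%:Z - 1))) ^+ k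
  + E z (a * ((p.1)%:Z - ((lcol lam p.2)%:Z - 1)) + b * ((crow lam p.1)%:Z - (p.2)%:Z)) ^+ k)).
  apply: eq_bigr => p _; rewrite big_split /= !(filt n1 pz) //.
rewrite (perm_big _ hperm) /=.
under eq_big_seq => p hp do rewrite (lcol_sof hy) (crow_sof hp).
rewrite exchange_big /= (bigD1 (Ordinal n1)) //= [X in _ + X]big1 ?addr0; last first.
  move=> k hk.
  have hk' : (0 < k < n)%N.
    rewrite ltn_ord andbT lt0n; apply: contra hk => /eqP h.
    by apply/eqP/val_inj.
  transitivity (\sum_(p <- boxes s) Tt (E z a ^+ k) (E z b ^+ k) s p).
    by apply: eq_bigr => p _; rewrite /Tt (Eterm_d n1 pz) (Eterm_u n1 pz).
  rewrite Tident ?(sof_sorted hy) ?expf_neq0 ?(E_neq0 n1 pz) //.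
  have V0 : Vs (E z a ^+ k) (E z b ^+ k) s = 0.
    rewrite /Vs -(perm_big _ hperm) /=.
    under eq_bigr do rewrite (Ebox n1 pz).
    by rewrite (part_sum n1 hbal (fun c => E z c ^+ k)) (sum_zk pz) // mulr0.
  have V1 : Vs (E z a ^+ k)^-1 (E z b ^+ k)^-1 s = 0.
    rewrite /Vs -(perm_big _ hperm) /=.
    under eq_bigr do rewrite !exprVn -invfM (Ebox n1 pz).
    by rewrite (part_sum n1 hbal (fun c => (E z c ^+ k)^-1)) (sum_zk_inv pz) // mulr0.
  rewrite V0 V1; ring.
under eq_bigr do rewrite !expr0.
rewrite sum_const_seq -(perm_size hperm) hsize !natrM; ring.
Qed.
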